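(* Let $n,k,t$ be positive integers with $k<n$ and $t\ge 4$, let $q$ be a prime power and $\mathcal{D}$ the Desarguesian $(t-1)$-spread of $\mathrm{PG}(nt-1,q)$. Let $\nu$ be a $\mathcal{D}_{n-k-1}$-subspace of $\mathrm{PG}(nt-1,q)$ and let $\Pi$ be an $(nt-kt+1)$-dimensional subspace containing $\nu$ such that the subspace of $\mathrm{PG}(n-1,q^t)$ spanned by the points of $\mathcal{B}(\Pi)$ has dimension $n-k+1$. Let $\Omega$ be an $(nt-kt-2)$-dimensional subspace of $\Pi$ meeting $\nu$ in an $(nt-kt-4)$-dimensional subspace, let $\Gamma$ be a plane of $\Pi$ skew from $\Omega$, and let $\bar{B}$ be a minimal blocking set (with respect to lines) of $\Gamma$ which is disjoint from $\nu$. Let $K$ be the cone with vertex $\Omega$ and base $\bar{B}$. Then $\mathcal{B}(K)$ is a minimal blocking set with respect to $(k-1)$-dimensional subspaces of $\mathrm{PG}(n-1,q^t)$.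
   Context: Field reduction: each point of $\mathrm{PG}(n-1,q^t)$ corresponds to a $(t-1)$-dimensional subspace of $\mathrm{PG}(nt-1,q)$ (the $1$-dimensional $\mathbb{F}_{q^t}$-subspace viewed over $\mathbb{F}_q$); these form the Desarguesian $(t-1)$-spread $\mathcal{D}$. A $\mathcal{D}_{r-1}$-subspace is an $(rt-1)$-dimensional subspace of $\mathrm{PG}(nt-1,q)$ spanned by elements of $\mathcal{D}$ (the field reduction of an $(r-1)$-dimensional subspace of $\mathrm{PG}(n-1,q^t)$). For $U\subseteq\mathrm{PG}(nt-1,q)$, $\mathcal{B}(U)$ is the set of elements of $\mathcal{D}$ meeting $U$, identified with points of $\mathrm{PG}(n-1,q^t)$. The cone with vertex $\Omega$ and base $\bar{B}$ is $\bigcup_{P\in\bar B}\langle P,\Omega\rangle$. A blocking set with respect to $j$-spaces is a point set meeting every $j$-dimensional subspace; minimal means no proper subset has this property. *)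

(* Defs.v *)
(* Projective spaces are modelled by vector subspaces of
   V = L^n ('rV[L]_n) where L is a finite field of order q^t; F_q is the
   subfield {c | c^q = c}. *)
From HB Require Import structures.
From mathcomp Require Import all_boot all_order all_algebra.
Set Implicit Arguments. Unset Strict Implicit. Unset Printing Implicit Defensive.
Import GRing.Theory.
Local Open Scope ring_scope.

Section FieldReduction.
Variables (L : finFieldType) (q n : nat).
Local Notation V := 'rV[L]_n.

Definition Fsub (S : {set V}) : bool :=
  [&& (0 : V) \in S,
      [forall x in S, forall y in S, x + y \in S] &
      [forall c : L, forall x in S, (c ^+ q == c) ==> (c *: x \in S)]].

(* S is an L-subspace of V (a subspace of PG(n-1,q^t)) *)
Definition Lsub (S : {set V}) : bool :=
  [&& (0 : V) \in S,
      [forall x in S, forall y in S, x + y \in S] &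
      [forall c : L, forall x in S, c *: x \in S]].

Definition Fspan (X : {set V}) : {set V} :=
  \bigcap_(S : {set V} | Fsub S && (X \subset S)) S.
Definition Lspan (X : {set V}) : {set V} :=
  \bigcap_(S : {set V} | Lsub S && (X \subset S)) S.

(* projective dimension d of an F_q-subspace: vector dimension d+1 *)
Definition Fpdim (S : {set V}) (d : nat) : Prop := Fsub S /\ #|S| = (q ^ d.+1)%N.
Definition Lpdim (S : {set V}) (d : nat) : Prop := Lsub S /\ #|S| = (#|L| ^ d.+1)%N.

(* points of PG(nt-1,q) and of PG(n-1,q^t) (= elements of the Desarguesian
   spread D) *)
Definition Fpoint (P : {set V}) : bool := Fsub P && (#|P| == q).
Definition Lpoint (X : {set V}) : bool := Lsub X && (#|X| == #|L|).

(* a D_{r-1}-subspace: field reduction of an (r-1)-dim subspace of PG(n-1,q^t) *)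
Definition Dsubspace (S : {set V}) (r : nat) : Prop :=
  Lsub S /\ #|S| = (#|L| ^ r)%N.

Definition Fpoints_of (S : {set V}) : {set {set V}} :=
  [set P | Fpoint P & P \subset S].

Definition Bset (U : {set {set V}}) : {set {set V}} :=
  [set X | Lpoint X &
     [exists P in U, exists v : V, [&& v != 0, v \in P & v \in X]]].

Definition cone (Om : {set V}) (Bb : {set {set V}}) : {set {set V}} :=
  [set P | Fpoint P & [exists b in Bb, P \subset Fspan (b :|: Om)]].

Definition blocking (isSub : {set V} -> Prop) (B : {set {set V}}) : Prop :=
  forall W, isSub W -> exists2 X, X \in B & X \subset W.

Definition minimal_blocking (isSub : {set V} -> Prop) (B : {set {set V}}) : Prop :=
  blocking isSub B /\ forall B' : {set {set V}}, B' \proper B -> ~ blocking isSub B'.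

End FieldReduction.

(* Main.v *)
Require Import Defs.
From HB Require Import structures.
From mathcomp Require Import all_boot all_order all_fingroup all_algebra.
From mathcomp Require Import cyclic finfield ring zify.
From Stdlib Require Import Classical.
Set Implicit Arguments. Unset Strict Implicit. Unset Printing Implicit Defensive.
Import GRing.Theory.
Local Open Scope ring_scope.

Section Fq.
Variables (L : finFieldType) (p e t : nat).
Hypotheses (pr_p : prime p) (Ht : (0 < t)%N) (HL : #|L| = ((p ^ e.+1) ^ t)%N).
Local Notation q := (p ^ e.+1)%N.
Definition Fq : {set L} := [set c | c ^+ q == c].
Lemma q_gt1 : (1 < q)%N.
Proof. by rewrite -{1}(expn0 p) ltn_exp2l // prime_gt1. Qed.

Lemma frobD (x y : L) : (x + y) ^+ q = x ^+ q + y ^+ q.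
Proof.
have pc : p \in [pchar L].
  by apply: (@card_finPcharP L p (e.+1 * t)); rewrite // HL -expnM.
apply: exprDn_pchar; rewrite pnatX orbF.
by rewrite (pnatE _ pr_p).
Qed.

Lemma frobN (x : L) : (- x) ^+ q = - x ^+ q.
Proof.
apply/eqP; rewrite -addr_eq0 addrC -frobD addrN expr0n.
by rewrite eqn0Ngt (ltnW q_gt1).
Qed.

Lemma Fq0 : 0 \in Fq.
Proof. by rewrite inE expr0n eqn0Ngt (ltnW q_gt1). Qed.
Lemma Fq1 : 1 \in Fq.
Proof. by rewrite inE expr1n. Qed.
Lemma FqD a b : a \in Fq -> b \in Fq -> a + b \in Fq.
Proof. by rewrite !inE frobD => /eqP-> /eqP->. Qed.
Lemma FqN a : a \in Fq -> - a \in Fq.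
Proof. by rewrite !inE frobN => /eqP->. Qed.
Lemma FqM a b : a \in Fq -> b \in Fq -> a * b \in Fq.
Proof. by rewrite !inE exprMn => /eqP-> /eqP->. Qed.
Lemma FqV a : a \in Fq -> a^-1 \in Fq.
Proof. by rewrite !inE exprVn => /eqP->. Qed.


Lemma card_Fq_le : (#|Fq| <= q)%N.
Proof.
have P0 : ('X^q - 'X : {poly L}) != 0.
  rewrite -size_poly_eq0 size_polyDl ?size_polyXn // size_polyN size_polyX ltnS.
  exact: q_gt1.
have := max_poly_roots P0 (rs := enum Fq).
rewrite size_polyDl ?size_polyXn ?size_polyN ?size_polyX ?ltnS ?q_gt1 //.

rewrite -cardE; apply=> //; last exact: enum_uniq; apply/allP=> x.
by rewrite mem_enum inE /root !hornerE => /eqP->; rewrite subrr.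
Qed.


Lemma card_Fq : #|Fq| = q.
Proof.
apply/eqP; rewrite eqn_leq card_Fq_le /=.
have [u Hu] : exists u : {unit L}, [set: {unit L}] = <[u]>%g.
  by apply/cyclicP; apply: (field_unit_group_cyclic [group of [set: {unit L}]]).
have ou : #[u]%g = (q.-1 * \sum_(i < t) q ^ i)%N.
  by rewrite /order -Hu card_finField_unit HL predn_exp.
set d := (\sum_(i < t) q ^ i)%N in ou.
have d_gt0 : (0 < d)%N.
  rewrite /d; case: (t) Ht => // t' _; rewrite big_ord_recl expn0 //.
pose f (j : 'I_q.-1) : L := val (u ^+ (j * d))%g.
have f_inj : injective f.
  move=> j1 j2 /val_inj /eqP; rewrite eq_expg_mod_order ou.
  rewrite !modn_small ?ltn_mul2r ?d_gt0 ?ltn_ord // eqn_pmul2r // => /eqP.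
  exact: val_inj.
have sub : f @: setT \subset Fq :\ 0.
  apply/subsetP=> x /imsetP[j _ ->]; rewrite !inE.
  rewrite -unitfE (valP (u ^+ (j * d))%g) /=.

  have ue : (val u) ^+ #[u]%g = 1.
    by rewrite -FinRing.val_unitX expg_order FinRing.val_unit1.
  rewrite /f !FinRing.val_unitX -exprM; apply/eqP.
  have -> : (j * d * q = j * d + j * #[u]%g)%N.
    rewrite ou; move: (nat_of_ord j) => jj.
    by rewrite -{1}(prednK (ltnW q_gt1)) mulnS -mulnA (mulnC d).
  by rewrite exprD (mulnC j #[u]%g) [X in _ * X]exprM ue expr1n mulr1.
have := subset_leq_card sub; rewrite card_imset // cardsT card_ord.
rewrite [#|Fq|](cardsD1 0) Fq0 add1n -(ltn_predK q_gt1) ltnS.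
by rewrite setDE setIC.
Qed.

Lemma Fq_facts : [/\ (0 : L) ^+ q = 0, (1 : L) ^+ q = 1,
  forall a b : L, a ^+ q = a -> b ^+ q = b -> (a + b) ^+ q = a + b,
  forall a : L, a ^+ q = a -> (- a) ^+ q = - a &
  #|[set c : L | c ^+ q == c]| = q].
Proof.
split.
- by have := Fq0; rewrite inE => /eqP.
- by rewrite expr1n.
- by move=> a b ha hb; rewrite frobD ha hb.
- by move=> a ha; rewrite frobN ha.
- exact: card_Fq.
Qed.

End Fq.

Section Infra.
Variables (L : finFieldType) (q n : nat).
Local Notation V := 'rV[L]_n.
Local Notation F := [set c : L | c ^+ q == c].
Hypotheses (FF0 : (0 : L) ^+ q = 0) (FF1 : (1 : L) ^+ q = 1)
  (FFD : forall a b : L, a ^+ q = a -> b ^+ q = b -> (a + b) ^+ q = a + b)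
  (FFN : forall a : L, a ^+ q = a -> (- a) ^+ q = - a)
  (cardF : #|F| = q) (q_gt1 : (1 < q)%N).
Implicit Types (S A B T P l : {set V}) (x y : V).

Lemma FFM (a b : L) : a ^+ q = a -> b ^+ q = b -> (a * b) ^+ q = a * b.
Proof. by rewrite exprMn => -> ->. Qed.
Lemma FFV (a : L) : a ^+ q = a -> (a^-1) ^+ q = a^-1.
Proof. by rewrite exprVn => ->. Qed.

Lemma FsubP (S : {set V}) : Fsub q S ->
  [/\ 0 \in S, forall x y, x \in S -> y \in S -> x + y \in S &
      forall c x, c ^+ q = c -> x \in S -> c *: x \in S].
Proof.
case/and3P=> S0 /forallP SD /forallP SZ; split=> //.
  by move=> x y xS yS; move: (SD x); rewrite xS => /forallP/(_ y); rewrite yS.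
move=> c x cq xS; move: (SZ c) => /forallP/(_ x); rewrite xS cq eqxx.
exact.
Qed.

Lemma FsubI (S : {set V}) : 0 \in S -> (forall x y, x \in S -> y \in S -> x + y \in S) ->
      (forall c x, c ^+ q = c -> x \in S -> c *: x \in S) -> Fsub q S.
Proof.
move=> S0 SD SZ; apply/and3P; split=> //.
  by apply/forallP=> x; apply/implyP=> xS; apply/forallP=> y; apply/implyP; apply: SD.
apply/forallP=> c; apply/forallP=> x; apply/implyP=> xS; apply/implyP=> /eqP cq.
exact: SZ.
Qed.

Lemma LsubP (S : {set V}) : Lsub S ->
  [/\ 0 \in S, forall x y, x \in S -> y \in S -> x + y \in S &
      forall c x, x \in S -> c *: x \in S].
Proof.
case/and3P=> S0 /forallP SD /forallP SZ; split=> //.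
  by move=> x y xS yS; move: (SD x); rewrite xS => /forallP/(_ y); rewrite yS.
by move=> c x xS; move: (SZ c) => /forallP/(_ x); rewrite xS.
Qed.

Lemma LsubI (S : {set V}) : 0 \in S -> (forall x y, x \in S -> y \in S -> x + y \in S) ->
      (forall c x, x \in S -> c *: x \in S) -> Lsub S.
Proof.
move=> S0 SD SZ; apply/and3P; split=> //.
  by apply/forallP=> x; apply/implyP=> xS; apply/forallP=> y; apply/implyP; apply: SD.
by apply/forallP=> c; apply/forallP=> x; apply/implyP=> xS; apply: SZ.
Qed.

Lemma Lsub_Fsub S : Lsub S -> Fsub q S.
Proof. by case/LsubP=> S0 SD SZ; apply: FsubI => // c x _; apply: SZ. Qed.

Lemma FsubN S x : Fsub q S -> x \in S -> - x \in S.
Proof.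
case/FsubP=> _ _ SZ xS; rewrite -scaleN1r; apply: SZ => //.
by rewrite FFN.
Qed.

Lemma FsubB S x y : Fsub q S -> x \in S -> y \in S -> x - y \in S.
Proof. move=> SS xS yS; case/FsubP: (SS) => _ SD _; exact/SD/FsubN. Qed.

Lemma Fsub_group S : Fsub q S -> group_set S.
Proof.
move=> SS; case/FsubP: (SS) => S0 SD _; apply/andP; split=> //.
by apply/subsetP=> x /mulsgP[a b aS bS ->]; apply: SD.
Qed.

Lemma memMP (A B : {set V}) x :
  reflect (exists a b, [/\ a \in A, b \in B & x = a + b]) (x \in (A * B)%g).
Proof.
apply: (iffP idP).
  by case/mulsgP=> a b aA bB ->; exists a, b.
by case=> a [b [aA bB ->]]; apply: mem_mulg.
Qed.

Lemma memM (A B : {set V}) a b : a \in A -> b \in B -> a + b \in (A * B)%g.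
Proof. by move=> aA bB; apply/memMP; exists a, b. Qed.

Lemma Fsub_mul A B : Fsub q A -> Fsub q B -> Fsub q (A * B)%g.
Proof.
move=> /FsubP[A0 AD AZ] /FsubP[B0 BD BZ]; apply: FsubI.
- by rewrite -[0]addr0; apply: memM.
- move=> x y /memMP[a [b [aA bB ->]]] /memMP[a' [b' [aA' bB' ->]]].
  by rewrite addrACA; apply: memM; [apply: AD | apply: BD].
- move=> c x cq /memMP[a [b [aA bB ->]]].
  by rewrite scalerDr; apply: memM; [apply: AZ | apply: BZ].
Qed.

Lemma Lsub_mul A B : Lsub A -> Lsub B -> Lsub (A * B)%g.
Proof.
move=> /LsubP[A0 AD AZ] /LsubP[B0 BD BZ]; apply: LsubI.
- by rewrite -[0]addr0; apply: memM.
- move=> x y /memMP[a [b [aA bB ->]]] /memMP[a' [b' [aA' bB' ->]]].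
  by rewrite addrACA; apply: memM; [apply: AD | apply: BD].
- move=> c x /memMP[a [b [aA bB ->]]].
  by rewrite scalerDr; apply: memM; [apply: AZ | apply: BZ].
Qed.

Lemma Fsub_setI A B : Fsub q A -> Fsub q B -> Fsub q (A :&: B).
Proof.
move=> /FsubP[A0 AD AZ] /FsubP[B0 BD BZ]; apply: FsubI.
- by rewrite inE A0 B0.
- by move=> x y /setIP[xA xB] /setIP[yA yB]; rewrite inE AD ?BD.
- by move=> c x cq /setIP[xA xB]; rewrite inE AZ ?BZ.
Qed.

Lemma card_mul A B : Fsub q A -> Fsub q B ->
  (#|A| * #|B| = #|(A * B)%g| * #|A :&: B|)%N.
Proof.
move=> /Fsub_group gA /Fsub_group gB.
exact: (mul_cardG (Group gA) (Group gB)).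
Qed.

Lemma mulC (A B : {set V}) : (A * B)%g = (B * A)%g.
Proof.
by apply/setP=> x; apply/memMP/memMP=> -[a [b [aA bB ->]]]; exists b, a; rewrite addrC.
Qed.

Lemma mulS1 A B : 0 \in B -> A \subset (A * B)%g.
Proof. by move=> B0; apply/subsetP=> x xA; rewrite -[x]addr0; apply: memM. Qed.

Lemma mulS2 A B : 0 \in A -> B \subset (A * B)%g.
Proof. by move=> A0; apply/subsetP=> x xB; rewrite -[x]add0r; apply: memM. Qed.

Lemma mul_sub A B S : Fsub q S -> A \subset S -> B \subset S -> (A * B)%g \subset S.
Proof.
move=> /FsubP[_ SD _] /subsetP AS /subsetP BS.
by apply/subsetP=> x /memMP[a [b [/AS aS /BS bS ->]]]; apply: SD.
Qed.

Lemma cardI1 A B : 0 \in A -> 0 \in B ->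
  (forall x, x \in A -> x \in B -> x = 0) -> #|A :&: B| = 1%N.
Proof.
move=> A0 B0 H; suff -> : A :&: B = [set 0] by apply: cards1.
apply/setP=> x.
rewrite !inE; apply/andP/eqP=> [[xA xB] | ->]; [exact: H | by rewrite A0].
Qed.

Definition Fline (x : V) : {set V} := [set c *: x | c in F].
Definition Lline (x : V) : {set V} := [set c *: x | c in [set: L]].

Lemma FlineP x y : reflect (exists2 c, c ^+ q = c & y = c *: x) (y \in Fline x).
Proof.
apply: (iffP imsetP) => [[c] | [c]]; rewrite ?inE.
  by move=> /eqP cq ->; exists c.
by move=> cq ->; exists c; rewrite // inE cq.
Qed.

Lemma LlineP x y : reflect (exists c, y = c *: x) (y \in Lline x).
Proof.
apply: (iffP imsetP) => [[c _ ->] | [c ->]]; first by exists c.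
by exists c; rewrite ?inE.
Qed.

Lemma Fline_id x : x \in Fline x.
Proof. by apply/FlineP; exists 1; rewrite ?scale1r. Qed.
Lemma Lline_id x : x \in Lline x.
Proof. by apply/LlineP; exists 1; rewrite scale1r. Qed.

Lemma Fsub_Fline x : Fsub q (Fline x).
Proof.
apply: FsubI.
- by apply/FlineP; exists 0; rewrite ?scale0r.
- move=> y z /FlineP[c cq ->] /FlineP[d dq ->].
  by apply/FlineP; exists (c + d); rewrite ?scalerDl ?FFD.
- move=> a y aq /FlineP[c cq ->].
  by apply/FlineP; exists (a * c); rewrite ?scalerA ?FFM.
Qed.

Lemma Lsub_Lline x : Lsub (Lline x).
Proof.
apply: LsubI.
- by apply/LlineP; exists 0; rewrite scale0r.
- move=> y z /LlineP[c ->] /LlineP[d ->].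
  by apply/LlineP; exists (c + d); rewrite scalerDl.
- move=> a y /LlineP[c ->].
  by apply/LlineP; exists (a * c); rewrite scalerA.
Qed.

Lemma scale_inj (x : V) : x != 0 -> injective (fun c : L => c *: x).
Proof.
move=> x0 c d /eqP; rewrite -subr_eq0 -scalerBl scaler_eq0 (negbTE x0) orbF.
by rewrite subr_eq0 => /eqP.
Qed.

Lemma card_Fline x : x != 0 -> #|Fline x| = q.
Proof. by move=> x0; rewrite card_imset ?cardF //; apply: scale_inj. Qed.

Lemma card_Lline x : x != 0 -> #|Lline x| = #|L|.
Proof. by move=> x0; rewrite card_imset ?cardsT //; apply: scale_inj. Qed.

Lemma Fline_sub S x : Fsub q S -> x \in S -> Fline x \subset S.
Proof.
by move=> /FsubP[_ _ SZ] xS; apply/subsetP=> y /FlineP[c cq ->]; apply: SZ.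
Qed.

Lemma Lline_sub S x : Lsub S -> x \in S -> Lline x \subset S.
Proof.
by move=> /LsubP[_ _ SZ] xS; apply/subsetP=> y /LlineP[c ->]; apply: SZ.
Qed.

Lemma Fline_Lline x : Fline x \subset Lline x.
Proof. by apply/subsetP=> y /FlineP[c _ ->]; apply/LlineP; exists c. Qed.

Lemma Fpoint_eq P x : Fpoint q P -> x \in P -> x != 0 -> P = Fline x.
Proof.
case/andP=> PS /eqP Pq xP x0; apply/eqP; rewrite eq_sym eqEcard Fline_sub //.
by rewrite /= card_Fline // Pq.
Qed.

Lemma Lpoint_eq P x : Lpoint P -> x \in P -> x != 0 -> P = Lline x.
Proof.
case/andP=> PS /eqP Pq xP x0; apply/eqP; rewrite eq_sym eqEcard Lline_sub //.
by rewrite /= card_Lline // Pq.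
Qed.

Lemma Fpoint_Fline x : x != 0 -> Fpoint q (Fline x).
Proof. by move=> x0; rewrite /Fpoint Fsub_Fline card_Fline ?eqxx. Qed.

Lemma Lpoint_Lline x : x != 0 -> Lpoint (Lline x).
Proof. by move=> x0; rewrite /Lpoint Lsub_Lline card_Lline ?eqxx. Qed.

Lemma nonzero_elt (S : {set V}) : 0 \in S -> (1 < #|S|)%N -> exists2 x, x \in S & x != 0.
Proof.
move=> S0; rewrite (cardsD1 0) S0 add1n ltnS card_gt0 => /set0Pn[x].
by rewrite !inE => /andP[x0 xS]; exists x.
Qed.

Lemma notin_elt (A S : {set V}) : (#|A| < #|S|)%N -> exists2 x, x \in S & x \notin A.
Proof.
move=> lt; apply/subsetPn; move: lt; apply: contraTN => /subset_leq_card.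
by rewrite -leqNgt.
Qed.

Lemma line_in (T : {set V}) : Fsub q T -> (q ^ 2 <= #|T|)%N ->
  exists l, [/\ Fsub q l, #|l| = (q ^ 2)%N & l \subset T].
Proof.
move=> TS Tq; have T0 : 0 \in T by case/FsubP: TS.
have [x xT x0] : exists2 x, x \in T & x != 0.
  apply: nonzero_elt => //; apply: leq_trans Tq.
  by rewrite -{1}(expn0 q) ltn_exp2l.
have [y yT yx] : exists2 y, y \in T & y \notin Fline x.
  apply: notin_elt; rewrite card_Fline //; apply: leq_trans Tq.
  by rewrite -{1}(expn1 q) ltn_exp2l.
have y0 : y != 0 by apply: contraNneq yx => ->; case/FsubP: (Fsub_Fline x).
exists (Fline x * Fline y)%g; split.
- by apply: Fsub_mul; apply: Fsub_Fline.
- have := card_mul (Fsub_Fline x) (Fsub_Fline y).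
  rewrite !card_Fline // cardI1 ?muln1 -?expnSr //.
  + by case/FsubP: (Fsub_Fline x).
  + by case/FsubP: (Fsub_Fline y).
  move=> z /FlineP[c cq ->] /FlineP[d dq] E.
  have [d0|d0] := eqVneq d 0.
    by move: E; rewrite d0 scale0r.
  case/negP: yx; apply/FlineP; exists (d^-1 * c); first by rewrite FFM ?FFV.
  by rewrite -scalerA E scalerA mulVf ?scale1r.
- by apply: mul_sub => //; apply: Fline_sub.
Qed.


Lemma card_V : #|[set: V]| = (#|L| ^ n)%N.
Proof. by rewrite cardsT card_mx mul1n. Qed.

Lemma card_L_gt1 : (1 < #|L|)%N.
Proof.
by rewrite (cardD1 0) (cardD1 1) !inE oner_eq0.
Qed.

Lemma Lline_triv W x c : Lsub W -> x \notin W -> c *: x \in W -> c = 0.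
Proof.
move=> /LsubP[_ _ WZ] xW cxW; apply/eqP; apply: contraNT xW => c0.
by rewrite -[x]scale1r -(mulVf c0) -scalerA; apply: WZ.
Qed.

Lemma extend (M N : {set V}) j : Lsub M -> Lsub N -> N \subset M ->
  (#|M| * #|L| ^ j <= #|L| ^ n)%N ->
  exists W, [/\ Lsub W, N \subset W, W :&: M = N & #|W| = (#|N| * #|L| ^ j)%N].
Proof.
move=> MS NS NM; elim: j => [|j IH] le.
  by exists N; rewrite expn0 muln1; split=> //; apply/setIidPl.
have [W [WS NW WM cW]] : exists W, [/\ Lsub W, N \subset W, W :&: M = N & #|W| = (#|N| * #|L| ^ j)%N].
  apply: IH; apply: leq_trans le; rewrite leq_mul2l leq_pexp2l ?orbT //.
  exact: ltnW card_L_gt1.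
have N0 : 0 \in N by case/LsubP: NS.
have Npos : (0 < #|N|)%N by rewrite card_gt0; apply/set0Pn; exists 0.
have [x _ xWM] : exists2 x, x \in [set: V] & x \notin (W * M)%g.
  apply: notin_elt; rewrite card_V; apply: leq_trans le.
  have := card_mul (Lsub_Fsub WS) (Lsub_Fsub MS); rewrite WM cW.
  move=> E; rewrite -(ltn_pmul2r Npos) -E.
  have -> : (#|M| * #|L| ^ j.+1 * #|N| = #|N| * #|L| ^ j * #|M| * #|L|)%N.
    by rewrite expnS; ring.
  rewrite -[X in (X < _)%N]muln1 ltn_pmul2l ?card_L_gt1 //.
  rewrite !muln_gt0 Npos expn_gt0 ltnW ?card_L_gt1 //= card_gt0.
  by apply/set0Pn; exists 0; case: (LsubP MS) => M0 _ _.
have M0 : 0 \in M by case/LsubP: MS.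
have W0 : 0 \in W by case/LsubP: WS.
have xW : x \notin W by apply: contra xWM => xW; rewrite -[x]addr0; apply: memM.
have x0 : x != 0 by apply: contraNneq xW => ->.
exists (W * Lline x)%g; split.
- by apply: Lsub_mul => //; apply: Lsub_Lline.
- apply: subset_trans NW _; apply: mulS1.
  by case/LsubP: (Lsub_Lline x).
- apply/setP=> y; rewrite inE; apply/andP/idP=> [[/memMP[w [c' [wW /LlineP[c ->] ->]]] yM]|yN].
    have [c0|c0] := eqVneq c 0.
      by rewrite c0 scale0r addr0 -WM inE wW -[w]addr0 -(scale0r x) -c0.
    case/negP: xWM; apply/memMP; exists (- c^-1 *: w), (c^-1 *: (w + c *: x)); split.
    + by case/LsubP: WS => _ _ ->.
    + by case/LsubP: MS => _ _ ->.
    + by rewrite scalerDr scalerA mulVf // scale1r addrA scaleNr addNr add0r.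
  split; last by move: yN; rewrite -WM => /setIP[].
  by apply: (subsetP (mulS1 _ _)); [case/LsubP: (Lsub_Lline x) | apply: (subsetP NW)].
- have := card_mul (Lsub_Fsub WS) (Lsub_Fsub (Lsub_Lline x)).
  have L0 : 0 \in Lline x by case: (LsubP (Lsub_Lline x)).
  rewrite cardI1 // ?muln1 => [<-|]; first by rewrite cW card_Lline // expnS; ring.
  move=> z zW /LlineP[c zE]; rewrite zE in zW *.
  by rewrite (Lline_triv WS xW zW) scale0r.
Qed.



Ltac cl := repeat match goal with H : _ |- _ => clear H end.

Lemma pow_le (a c X Y : nat) : (q ^ a <= X * Y)%N -> (X <= q ^ c)%N -> (c <= a)%N ->
  (q ^ (a - c) <= Y)%N.
Proof.
move=> le1 le2 ca; have qc : (0 < q ^ c)%N by rewrite expn_gt0 ltnW.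
rewrite -(leq_pmul2l qc) -expnD subnKC //; apply: leq_trans le1 _.
by rewrite leq_mul2r le2 orbT.
Qed.

Lemma pow_eq (a c X : nat) : (q ^ a = X * q ^ c)%N -> (c <= a)%N -> X = (q ^ (a - c))%N.
Proof.
move=> E ca; have qc : (0 < q ^ c)%N by rewrite expn_gt0 ltnW.
apply/eqP; rewrite -(eqn_pmul2r qc) -E -expnD subnK //.
Qed.

Lemma elt1 (S : {set V}) z : (#|S| <= 1)%N -> 0 \in S -> z \in S -> z = 0.
Proof.
move=> le S0 zS; apply/eqP; apply: contraTT le => z0.
by rewrite -ltnNge (cardsD1 0) S0 add1n ltnS card_gt0; apply/set0Pn; exists z; rewrite !inE z0.
Qed.

Variables (k t : nat).
Variables (nu Pi Om Ga : {set V}) (Bb : {set {set V}}).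
Hypotheses (Hk0 : (0 < k)%N) (Hkn : (k < n)%N) (Ht : (4 <= t)%N)
  (HL : #|L| = (q ^ t)%N)
  (Hnu : Dsubspace nu (n - k))
  (HPi : Fpdim q Pi (n * t - k * t + 1))
  (HnuPi : nu \subset Pi)
  (HBPi : Lpdim (Lspan (\bigcup_(X in Bset (Fpoints_of q Pi)) X)) (n - k + 1))
  (HOm : Fpdim q Om (n * t - k * t - 2))
  (HOmPi : Om \subset Pi)
  (HOmnu : Fpdim q (Om :&: nu) (n * t - k * t - 4))
  (HGa : Fpdim q Ga 2)
  (HGaPi : Ga \subset Pi)
  (HGaOm : Ga :&: Om = [set (0 : V)])
  (HBbGa : Bb \subset Fpoints_of q Ga)
  (HBbmin : minimal_blocking (fun l => Fpdim q l 1 /\ l \subset Ga) Bb).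

Local Notation M := (Lspan (\bigcup_(X in Bset (Fpoints_of q Pi)) X)).
Local Notation T := (n * t - k * t)%N.
Local Notation m := (n - k)%N.

Lemma T_eq : T = (m * t)%N.
Proof. by rewrite mulnBl. Qed.
Lemma T_ge : (t <= T)%N.
Proof. rewrite T_eq; apply: leq_pmull; rewrite subn_gt0. exact: Hkn. Qed.
Lemma T_ge4 : (4 <= T)%N.
Proof. exact: leq_trans Ht T_ge. Qed.

Lemma cPi : #|Pi| = (q ^ (T + 2))%N.
Proof. by case: HPi => _ ->; rewrite -addn1 -addnA. Qed.
Lemma cOm : #|Om| = (q ^ (T - 1))%N.
Proof. case: HOm => _ ->; congr (_ ^ _)%N; have := T_ge4; cl; lia. Qed.
Lemma cOmnu : #|Om :&: nu| = (q ^ (T - 3))%N.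
Proof. case: HOmnu => _ ->; congr (_ ^ _)%N; have := T_ge4; cl; lia. Qed.
Lemma cGa : #|Ga| = (q ^ 3)%N.
Proof. by case: HGa. Qed.
Lemma cnu : #|nu| = (q ^ T)%N.
Proof. by case: Hnu => _ ->; rewrite HL -expnM T_eq mulnC. Qed.
Lemma cM : #|M| = (q ^ (T + 2 * t))%N.
Proof.
case: HBPi => _ ->; rewrite HL -expnM T_eq; congr (_ ^ _)%N.
have := Hkn; cl; lia.
Qed.
Lemma cQ : #|L| = (q ^ t)%N.
Proof. exact: HL. Qed.

Lemma FsPi : Fsub q Pi. Proof. by case: HPi. Qed.
Lemma FsOm : Fsub q Om. Proof. by case: HOm. Qed.
Lemma FsGa : Fsub q Ga. Proof. by case: HGa. Qed.
Lemma Lnu : Lsub nu. Proof. by case: Hnu. Qed.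
Lemma Fsnu : Fsub q nu. Proof. exact: Lsub_Fsub Lnu. Qed.
Lemma LM : Lsub M. Proof. by case: HBPi. Qed.

Lemma in0 S : Fsub q S -> 0 \in S. Proof. by case/FsubP. Qed.
Lemma Lin0 S : Lsub S -> 0 \in S. Proof. by case/LsubP. Qed.

Lemma Pi_M : Pi \subset M.
Proof.
apply/subsetP=> x xPi; have [->|x0] := eqVneq x 0; first exact: Lin0 LM.
have : Lline x \subset M.
  apply/bigcapsP=> S /andP[_ /subsetP sub]; apply/subsetP=> y yL; apply: sub.
  apply/bigcupP; exists (Lline x) => //; rewrite inE Lpoint_Lline //=.
  apply/existsP; exists (Fline x); rewrite inE Fpoint_Fline //= Fline_sub ?FsPi //=.
  by apply/existsP; exists x; rewrite x0 Fline_id Lline_id.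
by move/subsetP; apply; apply: Lline_id.
Qed.

Lemma M_sub N : Lsub N -> Pi \subset N -> M \subset N.
Proof.
move=> LN PiN; apply: bigcap_inf; rewrite LN /=.
apply/subsetP=> y /bigcupP[X]; rewrite inE => /andP[XL /existsP[P /andP[]]].
rewrite inE => /andP[PF PPi] /existsP[v /and3P[v0 vP vX]].
rewrite (Lpoint_eq XL vX v0) => yv; apply: (subsetP (Lline_sub LN _)) yv.
by apply: (subsetP PiN); apply: (subsetP PPi).
Qed.

Lemma OmnuPi : (Om * nu)%g = Pi.
Proof.
apply/eqP; rewrite eqEcard mul_sub ?FsPi //=.
have := card_mul FsOm Fsnu; rewrite cOm cnu cOmnu -expnD => /pow_eq -> //.
  by rewrite cPi; have := T_ge4; rewrite leq_exp2l //; cl; lia.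
by have := T_ge4; cl; lia.
Qed.

Definition inU x := exists2 b, b \in Bb & x \in (Om * b)%g.

Lemma BbP b : b \in Bb -> Fpoint q b /\ b \subset Ga.
Proof. by move/(subsetP HBbGa); rewrite inE => /andP[]. Qed.

Lemma inU_Pi x : inU x -> x \in Pi.
Proof.
case=> b /BbP[/andP[Fb _] bGa] xb; apply: (subsetP (mul_sub FsPi HOmPi _)) xb.
exact: subset_trans bGa HGaPi.
Qed.

Lemma Fspan_eq b : b \in Bb -> Fspan q (b :|: Om) = (Om * b)%g.
Proof.
move=> /BbP[/andP[Fb _] _]; apply/eqP; rewrite eqEsubset; apply/andP; split.
  apply: bigcap_inf; rewrite Fsub_mul ?FsOm //= subUset mulS2 ?mulS1 ?in0 ?FsOm //.
apply/bigcapsP=> S /andP[FS]; rewrite subUset => /andP[bS OmS].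
exact: mul_sub.
Qed.

Lemma BK_P X : X \in Bset (cone q Om Bb) <->
  Lpoint X /\ exists u, [/\ u != 0, u \in X & inU u].
Proof.
rewrite inE; split.
  case/andP=> XL /existsP[P /andP[]]; rewrite inE => /andP[PF /existsP[b /andP[bB]]].
  rewrite Fspan_eq // => Psub /existsP[v /and3P[v0 vP vX]].
  by split=> //; exists v; split=> //; exists b => //; apply: (subsetP Psub).
case=> XL [u [u0 uX [b bB ub]]]; rewrite XL /=; apply/existsP; exists (Fline u).
rewrite inE Fpoint_Fline //=; apply/andP; split.
  apply/existsP; exists b; rewrite bB Fspan_eq //=.
  by apply: Fline_sub => //; apply: Fsub_mul; [exact: FsOm | case/BbP: bB => /andP[]].
by apply/existsP; exists u; rewrite u0 Fline_id uX.
Qed.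

Lemma Bb_line l : Fsub q l -> #|l| = (q ^ 2)%N -> l \subset Ga ->
  exists2 b, b \in Bb & b \subset l.
Proof. by move=> Fl cl lGa; case: HBbmin => bl _; apply: bl. Qed.

Lemma Bb_nonempty : exists b, b \in Bb.
Proof.
have [l [Fl cl lGa]] : exists l, [/\ Fsub q l, #|l| = (q ^ 2)%N & l \subset Ga].
  by apply: line_in; [exact: FsGa | rewrite cGa leq_exp2l].
by have [b bB _] := Bb_line Fl cl lGa; exists b.
Qed.

Lemma blocking_part : blocking (fun W => Lpdim W (k - 1)) (Bset (cone q Om Bb)).
Proof.
move=> W [LW cW].
have cW' : #|W| = (q ^ (t * k))%N.
  by rewrite cW HL -expnM; congr (_ ^ (_ * _))%N; have := Hk0; cl; lia.
have FW := Lsub_Fsub LW.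
set S' := W :&: Pi.
have FS' : Fsub q S' by apply: Fsub_setI => //; exact: FsPi.
have cS' : (q ^ 2 <= #|S'|)%N.
  have E := card_mul FW FsPi; rewrite cW' cPi -expnD in E.
  have := pow_le (c := t * n) (eq_leq E) _ _.
  have -> : (t * k + (T + 2) - t * n = 2)%N.
    have h : (k * t <= n * t)%N by rewrite leq_mul2r ltnW ?orbT.
    rewrite (mulnC t k) (mulnC t n); move: h; cl; lia.
  apply.
    by rewrite expnM -HL -card_V; apply: subset_leq_card; apply: subsetT.
  have h : (k * t <= n * t)%N by rewrite leq_mul2r ltnW ?orbT.
  rewrite (mulnC t k) (mulnC t n); move: h; cl; lia.
case: (boolP [exists o, [&& o \in S', o \in Om & o != 0]]).
  case/existsP=> o /and3P[oS oOm o0].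
  have [b bB] := Bb_nonempty.
  exists (Lline o); last by apply: Lline_sub => //; case/setIP: oS.
  apply/BK_P; split; first exact: Lpoint_Lline.
  exists o; split=> //; first exact: Lline_id.
  exists b => //; rewrite -[o]addr0; apply: memM => //.
  by case/BbP: bB => /andP[/in0 ? _] _.
rewrite negb_exists => /forallP noOm.
have S'Om0 : forall x, x \in S' -> x \in Om -> x = 0.
  by move=> x xS xO; move: (noOm x); rewrite xS xO /= negbK => /eqP.
set Tset := Ga :&: (S' * Om)%g.
have FSO : Fsub q (S' * Om)%g by apply: Fsub_mul => //; exact: FsOm.
have FT : Fsub q Tset by apply: Fsub_setI => //; exact: FsGa.
have cSO : (q ^ (T + 1) <= #|(S' * Om)%g|)%N.
  have := card_mul FS' FsOm; rewrite cardI1 ?in0 ?FsOm // muln1 cOm => <-.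
  have -> : (T + 1 = 2 + (T - 1))%N by have := T_ge4; cl; lia.
  by rewrite expnD leq_mul2r cS' orbT.
have cT : (q ^ 2 <= #|Tset|)%N.
  have E := card_mul FsGa FSO; rewrite cGa in E.
  have := pow_le (a := 3 + (T + 1)) (c := T + 2) (X := #|(Ga * (S' * Om))%g|) (Y := #|Tset|).
  have -> : (3 + (T + 1) - (T + 2) = 2)%N by cl; lia.
  apply.
  - by rewrite -E expnD leq_mul2l cSO orbT.
  - rewrite -cPi; apply: subset_leq_card; apply: mul_sub; first exact: FsPi.
      exact: HGaPi.
    apply: mul_sub; first exact: FsPi.
      by apply: subset_trans (subsetIr _ _) _.
    exact: HOmPi.
  - cl; lia.
have [l [Fl cl lT]] := line_in FT cT.
have [b bB bl] := Bb_line Fl cl (subset_trans lT (subsetIl _ _)).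
have [/andP[Fb /eqP cb] bGa] := BbP bB.
have [be beb be0] : exists2 be, be \in b & be != 0 by apply: nonzero_elt (in0 Fb) _; rewrite cb.
have /setIP[beGa /memMP[s [o [sS oOm beE]]]] := subsetP lT _ (subsetP bl _ beb).
have s0 : s != 0.
  apply/eqP => s0; move: be0; rewrite beE s0 add0r => o0.
  have : o \in Ga :&: Om by rewrite inE oOm -[o]add0r -s0 -beE beGa.
  by rewrite HGaOm inE (negbTE o0).
exists (Lline s); last by apply: Lline_sub => //; case/setIP: sS.
apply/BK_P; split; first exact: Lpoint_Lline.
exists s; split=> //; first exact: Lline_id.
exists b => //; have -> : s = - o + be by rewrite beE addrC addrK.
by apply: memM => //; apply: FsubN => //; exact: FsOm.
Qed.

Definition Ngood u N := [/\ Lsub N, N \subset M, #|N| = (#|L| ^ 2)%N &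
   forall y, y \in N -> inU y -> y \in Lline u].

Lemma N_nu u : u != 0 -> u \in nu -> exists N, Ngood u N.
Proof.
move=> u0 unu.
set bad := [set x : V | [exists c : L, (c != 0) && (c *: x \in Pi)]].
have cbad : (#|bad| <= #|L| * #|Pi|)%N.
  rewrite -cardsT -cardsX; apply: leq_trans (leq_imset_card (fun cp : L * V => cp.1^-1 *: cp.2) _).
  apply: subset_leq_card; apply/subsetP=> x; rewrite inE => /existsP[c /andP[c0 cx]].
  apply/imsetP; exists (c, c *: x); first by rewrite inE /= inE cx.
  by rewrite /= scalerA mulVf ?scale1r.
have [w wM wbad] : exists2 w, w \in M & w \notin bad.
  apply: notin_elt; apply: leq_ltn_trans cbad _.
  rewrite cM cPi cQ -expnD ltn_exp2l //; have := Ht; cl; lia.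
have key : forall c, c *: w \in Pi -> c = 0.
  move=> c cw; apply/eqP; apply: contraNT wbad => c0.
  by rewrite inE; apply/existsP; exists c; rewrite c0.
have w0 : w != 0.
  apply/eqP=> w0; have := key 1; rewrite w0 scale1r in0 ?FsPi //.
  by move/(_ isT)/eqP; rewrite oner_eq0.
have uPi : u \in Pi by apply: (subsetP HnuPi).
exists (Lline u * Lline w)%g; split.
- by apply: Lsub_mul; apply: Lsub_Lline.
- apply: mul_sub; first exact: Lsub_Fsub LM.
    by apply: Lline_sub; [exact: LM | exact: (subsetP Pi_M)].
  by apply: Lline_sub; [exact: LM | ].
- have := card_mul (Lsub_Fsub (Lsub_Lline u)) (Lsub_Fsub (Lsub_Lline w)).
  have triv : forall z, z \in Lline u -> z \in Lline w -> z = 0.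
    move=> z /LlineP[a ->] /LlineP[c E].
    have : c *: w \in Pi by rewrite -E; apply: (subsetP HnuPi); case/LsubP: Lnu => _ _ ->.
    by move/key=> c0; rewrite E c0 scale0r.
  rewrite !card_Lline // cardI1 ?Lin0 ?Lsub_Lline // muln1 => <-.
  by rewrite expnS expn1.
- move=> y /memMP[y1 [y2 [/LlineP[a ->] /LlineP[c ->] ->]]] /inU_Pi yPi.
  have auPi : a *: u \in Pi by apply: (subsetP HnuPi); case/LsubP: Lnu => _ _ ->.
  have : c *: w \in Pi by have := FsubB FsPi yPi auPi; rewrite addrAC subrr add0r.
  by move/key => c0; rewrite c0 scale0r addr0; apply/LlineP; exists a.
Qed.

Lemma OmGa0 x : x \in Om -> x \in Ga -> x = 0.
Proof. by move=> a b; apply/set1P; rewrite -HGaOm inE b a. Qed.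

Lemma FqF (a : L) : a ^+ q = a -> a \in F.
Proof. by rewrite inE => ->. Qed.

Lemma N_notnu u : u != 0 -> inU u -> u \notin nu -> exists N, Ngood u N.
Proof.
move=> u0 [b0 b0B ub0] unu.
have [/andP[Fb0 /eqP cb0] b0Ga] := BbP b0B.
have uPi : u \in Pi by apply: inU_Pi; exists b0.
have [l [[[Fl cl] lGa] ntan]] : exists l, (Fpdim q l 1 /\ l \subset Ga) /\
    ~ exists2 X, X \in Bb :\ b0 & X \subset l.
  apply: NNPP => Hn; case: HBbmin => _ /(_ (Bb :\ b0)); apply.
    by apply/properP; split; [exact: subsetDl | exists b0; rewrite ?inE ?eqxx].
  move=> W HW; apply: NNPP => H'; apply: Hn; exists W; split => //.
have b0l : b0 \subset l.
  have [X XB Xl] := Bb_line Fl cl lGa.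
  case: (eqVneq X b0) => [<-//|Xb0]; case: ntan; exists X => //; by rewrite !inE Xb0.
set Hs := (Om * l)%g.
have FH : Fsub q Hs by apply: Fsub_mul => //; exact: FsOm.
have lPi : l \subset Pi by apply: subset_trans lGa HGaPi.
have HPi' : Hs \subset Pi by apply: mul_sub; [exact: FsPi | exact: HOmPi | exact: lPi].
have tang : forall y, y \in Hs -> inU y -> y \in (Om * b0)%g.
  move=> y /memMP[o [la [oOm laL ->]]] [b bB /memMP[o' [be [o'Om beb E]]]].
  have [Pb bGa] := BbP bB.
  have Fb : Fsub q b by case/andP: Pb.
  have laE : la = be.
    apply/eqP; rewrite -subr_eq0; apply/eqP; apply: OmGa0.
      have -> : la - be = o' - o.
        have -> : o' = o + la - be by rewrite E addrK.
        by rewrite addrAC (addrC o) addrK.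
      by apply: FsubB => //; exact: FsOm.
    by apply: FsubB; [exact: FsGa | exact: (subsetP lGa) | exact: (subsetP bGa)].
  rewrite laE; apply: memM => //.
  have [be0|be0] := eqVneq be 0; first by rewrite be0 in0.
  have bl : b \subset l by rewrite (Fpoint_eq Pb beb be0); apply: Fline_sub => //; rewrite -laE.
  case: (eqVneq b b0) => [<-//|bb0]; case: ntan; exists b => //; by rewrite !inE bb0.
have cH : #|Hs| = (q ^ (T + 1))%N.
  have := card_mul FsOm Fl; rewrite cOm cl cardI1 ?in0 ?FsOm // ?muln1.
    by rewrite -expnD => <-; congr (_ ^ _)%N; have := T_ge4; cl; lia.
  by move=> x xO xl; apply: OmGa0 => //; apply: (subsetP lGa).
have FOb : Fsub q (Om * b0)%g by apply: Fsub_mul => //; exact: FsOm.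
have cOb : #|(Om * b0)%g| = (q ^ T)%N.
  have := card_mul FsOm Fb0; rewrite cOm cb0 cardI1 ?in0 ?FsOm // ?muln1.
    by rewrite -{2}(expn1 q) -expnD => <-; congr (_ ^ _)%N; have := T_ge4; cl; lia.
  by move=> x xO xl; apply: OmGa0 => //; apply: (subsetP b0Ga).
set A := (Fline u * nu)%g.
have FA : Fsub q A by apply: Fsub_mul; [exact: Fsub_Fline | exact: Fsnu].
have cA : #|A| = (q ^ (T + 1))%N.
  have := card_mul (Fsub_Fline u) Fsnu; rewrite card_Fline // cnu cardI1 ?in0 ?Fsnu ?Fsub_Fline // ?muln1.
    by rewrite -{1}(expn1 q) -expnD addnC => <-.
  move=> z /FlineP[c cq ->] zn; have [c0|c0] := eqVneq c 0; first by rewrite c0 scale0r.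
  case/negP: unu; rewrite -[u]scale1r -(mulVf c0) -scalerA.
  by case/LsubP: Lnu => _ _ ->.
have AHPi : (A * Hs)%g = Pi.
  apply/eqP; rewrite eqEsubset; apply/andP; split.
    apply: mul_sub => //; first exact: FsPi.
    by apply: mul_sub; [exact: FsPi | exact: Fline_sub FsPi uPi | exact: HnuPi].
  rewrite -{1}OmnuPi mulC; apply: mulgSS.
    by apply: mulS2; apply: in0; apply: Fsub_Fline.
  by apply: mulS1; apply: in0.
have cAH : #|A :&: Hs| = (q ^ T)%N.
  have := card_mul FA FH; rewrite cA cH AHPi cPi -expnD (mulnC (q ^ (T + 2))%N) => E.
  rewrite (pow_eq E); first by congr (_ ^ _)%N; cl; lia.
  by cl; lia.
have [w wH wn] : exists2 w, w \in Hs & w \notin (Om * b0)%g :|: (A :&: Hs).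
  apply: notin_elt; rewrite cardsU cOb cAH cH.
  have h1 : (0 < #|(Om * b0)%g :&: (A :&: Hs)|)%N.
    rewrite card_gt0; apply/set0Pn; exists 0; rewrite !inE !in0 //.
  have h2 : (2 * q ^ T <= q ^ (T + 1))%N.
    by rewrite expnD expn1 mulnC leq_mul2l q_gt1 orbT.
  have h3 : (0 < q ^ T)%N by rewrite expn_gt0 ltnW.
  move: h1 h2 h3; move: #|(Om * b0)%g :&: (A :&: Hs)| (q ^ T)%N (q ^ (T + 1))%N => c a b; cl; lia.
have wOb : w \notin (Om * b0)%g by move: wn; rewrite inE negb_or => /andP[].
have wA : w \notin A by move: wn; rewrite !inE wH andbT negb_or => /andP[].
have w0 : w != 0 by apply: contraNneq wOb => ->; apply: in0.
have wPi : w \in Pi by apply: (subsetP HPi').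
have FuA : Fline u \subset A by apply: mulS1; apply: in0; exact: Fsnu.
have wFu : w \notin Fline u by apply: contra wA; apply: (subsetP FuA).
set S := (Fline u * Fline w)%g.
have FS : Fsub q S by apply: Fsub_mul; apply: Fsub_Fline.
have cS : #|S| = (q ^ 2)%N.
  have := card_mul (Fsub_Fline u) (Fsub_Fline w).
  rewrite !card_Fline // cardI1 ?in0 ?Fsub_Fline // ?muln1 => [<-|]; first by rewrite expnS expn1.
  move=> z /FlineP[a aq ->] /FlineP[c cq E].
  have [c0|c0] := eqVneq c 0; first by rewrite E c0 scale0r.
  case/negP: wFu; apply/FlineP; exists (c^-1 * a); first by rewrite FFM ?FFV.
  by rewrite -scalerA E scalerA mulVf ?scale1r.
have nuS0 : forall z, z \in nu -> z \in S -> z = 0.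
  move=> z zn /memMP[z1 [z2 [/FlineP[a aq ->] /FlineP[c cq ->] ze]]].
  have [c0|c0] := eqVneq c 0.
    rewrite c0 scale0r addr0 in ze; rewrite ze.
    have [a0|a0] := eqVneq a 0; first by rewrite a0 scale0r.
    case/negP: unu; rewrite -[u]scale1r -(mulVf a0) -scalerA -ze.
    by case/LsubP: Lnu => _ _ ->.
  case/negP: wA; apply/memMP; exists (- (c^-1 * a) *: u), (c^-1 *: z); split.
  - by apply/FlineP; exists (- (c^-1 * a)); rewrite // FFN ?FFM ?FFV.
  - by case/LsubP: Lnu => _ _ ->.
  - by rewrite ze scalerDr !scalerA mulVf // scale1r scaleNr addKr.
have nuSPi : (nu * S)%g = Pi.
  have SPi : S \subset Pi.
    by apply: mul_sub; [exact: FsPi | exact: Fline_sub FsPi uPi | exact: Fline_sub FsPi wPi].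
  have sub : (nu * S)%g \subset Pi by apply: mul_sub => //; exact: FsPi.
  apply/eqP; rewrite eqEcard sub /=.
  have := card_mul Fsnu FS; rewrite cnu cS (cardI1 (in0 Fsnu) (in0 FS) nuS0) muln1 => <-.
  by rewrite cPi -expnD.
set N := (Lline u * Lline w)%g.
have LN : Lsub N by apply: Lsub_mul; apply: Lsub_Lline.
have FN := Lsub_Fsub LN.
have SN : S \subset N by apply: mulgSS; apply: Fline_Lline.
have MN : M \subset (nu * N)%g.
  apply: M_sub; first by apply: Lsub_mul => //; exact: Lnu.
  by rewrite -{1}nuSPi; apply: mulgSS.
have cN_le : (#|N| <= #|L| ^ 2)%N.
  have := card_mul (Fsub_Fline u) (Fsub_Fline w).
  have := card_mul (Lsub_Fsub (Lsub_Lline u)) (Lsub_Fsub (Lsub_Lline w)).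
  rewrite !card_Lline // => E _; rewrite expnS expn1 E.
  rewrite -[X in (X <= _)%N]muln1 leq_mul2l card_gt0 orbC; apply/orP; left.
  by apply/set0Pn; exists 0; rewrite inE !Lin0 ?Lsub_Lline.
have ineq : (#|M| * #|nu :&: N| <= #|nu| * #|N|)%N.
  by rewrite (card_mul Fsnu FN) leq_mul2r subset_leq_card ?orbT.
have x1 : (0 < #|nu :&: N|)%N.
  by rewrite card_gt0; apply/set0Pn; exists 0; rewrite inE in0 ?Fsnu // in0.
have cN : #|N| = (#|L| ^ 2)%N.
  apply/eqP; rewrite eqn_leq cN_le /=.
  have qT : (0 < q ^ T)%N by rewrite expn_gt0 ltnW.
  move: ineq; rewrite cM cnu => ineq.
  rewrite cQ -expnM -(leq_pmul2l qT) -expnD; apply: leq_trans ineq.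
  by rewrite (mulnC t 2) -[X in (X <= _)%N]muln1 leq_mul2l x1 orbT.
have nuN0 : forall z, z \in nu -> z \in N -> z = 0.
  move=> z zn zN; apply: (@elt1 (nu :&: N)); rewrite ?inE ?zn ?zN ?in0 ?Fsnu //.
  move: ineq; rewrite cM cnu cN cQ -expnM -!expnD (mulnC 2%N t).
  by rewrite -[X in (_ <= X)%N]muln1 leq_pmul2l // expn_gt0 ltnW.
have NPiS : forall y, y \in N -> y \in Pi -> y \in S.
  move=> y yN; rewrite -nuSPi => /memMP[z [s [zn sS ye]]].
  have zN : z \in N by have := FsubB FN yN (subsetP SN _ sS); rewrite ye addrK.
  by rewrite ye (nuS0 z zn) ?add0r //; rewrite (nuN0 z zn zN) in0.
exists N; split => //.
- apply: mul_sub; first exact: Lsub_Fsub LM.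
    by apply: Lline_sub; [exact: LM | exact: (subsetP Pi_M)].
  by apply: Lline_sub; [exact: LM | exact: (subsetP Pi_M)].
- move=> y yN yU; have /NPiS := inU_Pi yU => /(_ yN).
  case/memMP=> y1 [y2 [/FlineP[a aq ->] /FlineP[c cq ->] ye]].
  have [c0|c0] := eqVneq c 0.
    by rewrite ye c0 scale0r addr0; apply/LlineP; exists a.
  have uH : u \in Hs by apply: (subsetP (mulgSS (subxx Om) b0l)).
  have yH : y \in Hs.
    by rewrite ye; case/FsubP: (FH) => _ HD HZ; apply: HD; apply: HZ.
  have yOb := tang y yH yU.
  case/negP: wOb.
  have -> : w = c^-1 *: (y - a *: u).
    by rewrite ye addrAC subrr add0r scalerA mulVf // scale1r.
  case/FsubP: (FOb) => _ _ HZ; apply: HZ; first by rewrite FFV.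
  apply: FsubB => //; case/FsubP: (FOb) => _ _ -> //.
Qed.


Lemma tangent_W u : u != 0 -> inU u -> exists W, Lpdim W (k - 1) /\
  (forall y, y \in W -> inU y -> y \in Lline u).
Proof.
move=> u0 uU.
have [N [LN NM cN Nprop]] : exists N, Ngood u N.
  have [unu|unu] := boolP (u \in nu).
    exact: N_nu.
  exact: N_notnu.
case: (eqVneq k 1) => [k1|k1].
  exists (Lline u); split=> //; split; first exact: Lsub_Lline.
  by rewrite card_Lline // k1 expn1.
have k2 : (1 < k)%N by rewrite ltn_neqAle eq_sym k1 Hk0.
have le : (#|M| * #|L| ^ (k - 2) <= #|L| ^ n)%N.
  case: HBPi => _ ->; rewrite -expnD; apply: eq_leq; congr (_ ^ _)%N.
  by move: k2 Hkn; cl; lia.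
have [W [LW NW WM cW]] := @extend M N (k - 2) LM LN NM le.
exists W; split.
  split=> //; rewrite cW cN -expnD; congr (_ ^ _)%N; move: k2; cl; lia.
move=> y yW yU; apply: Nprop => //.
have : y \in W :&: M by rewrite inE yW (subsetP Pi_M) ?inU_Pi.
by rewrite WM.
Qed.

Lemma minimal_part (B' : {set {set V}}) : B' \proper Bset (cone q Om Bb) ->
  ~ blocking (fun W => Lpdim W (k - 1)) B'.
Proof.
move=> /properP[sub [X XBK XB']] bl.
have [XL [u [u0 uX uU]]] := (BK_P X).1 XBK.
have [W [HW Wp]] := tangent_W u0 uU.
have [Y YB' YW] := bl W HW.
have [YL [y [y0 yY yU]]] := (BK_P Y).1 (subsetP sub _ YB').
have yu : y \in Lline u := Wp y (subsetP YW _ yY) yU.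
have E1 := Lpoint_eq YL yY y0.
have E2 := Lpoint_eq XL uX u0.
have E3 := Lpoint_eq (Lpoint_Lline u0) yu y0.
by move: XB'; rewrite E2 E3 -E1 YB'.
Qed.

Lemma main_result : minimal_blocking (fun W => Lpdim W (k - 1)) (Bset (cone q Om Bb)).
Proof. by split; [exact: blocking_part | exact: minimal_part]. Qed.

End Infra.

Local Close Scope ring_scope.

Theorem theorem4p10
  (n k t q : nat) (L : finFieldType)
  (Hk0 : (0 < k)%N) (Hkn : (k < n)%N) (Ht : (4 <= t)%N)
  (Hq : exists p e : nat, prime p /\ q = (p ^ e.+1)%N)
  (HL : #|L| = (q ^ t)%N)
  (nu Pi Om Ga : {set 'rV[L]_n}) (Bb : {set {set 'rV[L]_n}})
  (Hnu : Dsubspace nu (n - k))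
  (HPi : Fpdim q Pi (n * t - k * t + 1))
  (HnuPi : nu \subset Pi)
  (HBPi : Lpdim (Lspan (\bigcup_(X in Bset (Fpoints_of q Pi)) X)) (n - k + 1))
  (HOm : Fpdim q Om (n * t - k * t - 2))
  (HOmPi : Om \subset Pi)
  (HOmnu : Fpdim q (Om :&: nu) (n * t - k * t - 4))
  (HGa : Fpdim q Ga 2)
  (HGaPi : Ga \subset Pi)
  (HGaOm : Ga :&: Om = [set (0 : 'rV[L]_n)%R])
  (HBbGa : Bb \subset Fpoints_of q Ga)
  (HBbmin : minimal_blocking (fun l => Fpdim q l 1 /\ l \subset Ga) Bb)
  (HBbnu : forall P, P \in Bb -> ~~ (P \subset nu)) :
  minimal_blocking (fun W => Lpdim W (k - 1)) (Bset (cone q Om Bb)).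
Proof.
case: Hq => p [e [pr qE]].
have t0 : (0 < t)%N by apply: leq_trans Ht.
have HL' : #|L| = ((p ^ e.+1) ^ t)%N by rewrite -qE.
have [FF0 FF1 FFD FFN cF] := Fq_facts pr t0 HL'.
rewrite -qE in FF0 FF1 FFD FFN cF.
have q_gt1 : (1 < q)%N by rewrite qE -{1}(expn0 p) ltn_exp2l // prime_gt1.
by apply: main_result; try eassumption.
Qed.
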